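(* There is a universal constant $C$ such that for every Borel set $A\subset[0,1]$ (with Lebesgue measure $|A|$): \[ \|G_{\mathbf{k}}\|_{L^1(A\times A)}\leq C\,\frac{|A|}{|\mathbf{k}|}\min\Big\{|A|,\frac{1}{|\mathbf{k}|}\Big\}\quad\text{for all }\mathbf{k}\neq\mathbf 0, \] and \[ \|G_{\mathbf{0}}\|_{L^1(A\times A)}\leq C\,|A|^2\,\frac{1}{|A|}\int_A\min\{z,1-z\}\,dz . \]
   Context: For $\mathbf{k}\in\mathbb{R}^2\setminus\{\mathbf 0\}$ and $z,z'\in[0,1]$, $G_{\mathbf{k}}(z,z')=\frac{\mathrm{csch}(|\mathbf{k}|)}{|\mathbf{k}|}\sinh(|\mathbf{k}|z)\sinh(|\mathbf{k}|(1-z'))$ if $z\le z'$ and $\frac{\mathrm{csch}(|\mathbf{k}|)}{|\mathbf{k}|}\sinh(|\mathbf{k}|z')\sinh(|\mathbf{k}|(1-z))$ if $z\ge z'$; $G_{\mathbf 0}(z,z')=z(1-z')$ if $z\le z'$ and $z'(1-z)$ if $z\ge z'$. These are the Green's functions of $-\frac{d^2}{dz^2}+|\mathbf{k}|^2$ on $[0,1]$ with zero Dirichlet conditions. *)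

(* Defs.v *)
From mathcomp Require Import all_boot all_order all_algebra.
From mathcomp Require Import all_classical all_reals all_analysis.
Set Implicit Arguments. Unset Strict Implicit. Unset Printing Implicit Defensive.
Import Order.TTheory GRing.Theory Num.Theory.
Local Open Scope ring_scope.

Definition sinh {R : realType} (x : R) : R := (expR x - expR (- x)) / 2.

Definition knorm {R : realType} (k : R * R) : R := Num.sqrt (k.1 ^+ 2 + k.2 ^+ 2).

(* Green's function G_k(z,z') of -d^2/dz^2 + |k|^2 on [0,1], Dirichlet b.c. *)
Definition Gk {R : realType} (k : R * R) (z z' : R) : R :=
  let a := knorm k in
  if k == (0, 0) then
    (if z <= z' then z * (1 - z') else z' * (1 - z))
  else
    (if z <= z' then (sinh a)^-1 / a * sinh (a * z) * sinh (a * (1 - z'))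
     else (sinh a)^-1 / a * sinh (a * z') * sinh (a * (1 - z))).

(* Main.v *)
Require Import Defs.
From mathcomp Require Import all_boot all_order all_algebra.
From mathcomp Require Import all_classical all_reals all_analysis.
From mathcomp Require Import ring lra measurable_realfun.
Import Order.TTheory GRing.Theory Num.Theory.
Import numFieldNormedType.Exports.
Local Open Scope classical_set_scope.
Local Open Scope ring_scope.

Section pointwise.
Context {R : realType}.
Implicit Types x y z d : R.

Lemma sinh_ge0 x : 0 <= x -> 0 <= sinh x.
Proof.
move=> x0; rewrite /sinh divr_ge0// subr_ge0 ler_expR; lra.
Qed.

Lemma sinh_gt0 x : 0 < x -> 0 < sinh x.
Proof.
move=> x0; rewrite /sinh divr_gt0// subr_gt0 ltr_expR; lra.
Qed.

Lemma sinh_key x y d : 0 <= x -> 0 <= y -> 0 <= d ->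
  2 * sinh x * sinh y * expR d <= sinh (x + y + d).
Proof.
move=> x0 y0 d0; rewrite /sinh !expRN !expRD.
have u1 : 1 <= expR x by rewrite -expR0 ler_expR.
have v1 : 1 <= expR y by rewrite -expR0 ler_expR.
have w1 : 1 <= expR d by rewrite -expR0 ler_expR.
set u := expR x in u1 *; set v := expR y in v1 *; set w := expR d in w1 *.
have u0 : u != 0 by rewrite gt_eqF// (lt_le_trans _ u1).
have v0 : v != 0 by rewrite gt_eqF// (lt_le_trans _ v1).
have w0 : w != 0 by rewrite gt_eqF// (lt_le_trans _ w1).
rewrite !invfM.
set U := u^-1; set V := v^-1; set W := w^-1.
have uU : u * U = 1 by rewrite mulfV.
have vV : v * V = 1 by rewrite mulfV.
have wW : w * W = 1 by rewrite mulfV.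
have U0 : 0 < U by rewrite invr_gt0 (lt_le_trans _ u1).
have V0 : 0 < V by rewrite invr_gt0 (lt_le_trans _ v1).
have W0 : 0 < W by rewrite invr_gt0 (lt_le_trans _ w1).
have U1 : U <= 1 by rewrite invf_le1// (lt_le_trans _ u1).
have V1 : V <= 1 by rewrite invf_le1// (lt_le_trans _ v1).
have W1 : W <= 1 by rewrite invf_le1// (lt_le_trans _ w1).
have f1 : U * V <= 1 by nra.
have f2 : U * V * W <= 1 by nra.
have f3 : 2 <= u * V + U * v.
  have t0 : 0 < u * V by nra.
  have tt : (u * V) * (U * v) = 1 by rewrite mulrACA uU mul1r mulrC vV.
  have s0 : 0 <= U * v by nra.
  have := mulr_ge0 (sqr_ge0 (u * V - 1)) s0.
  nra.
have : U * V * w + U * V * W <= w * (u * V + U * v) by nra.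
move=> h; nra.
Qed.


Lemma Gcore (K z z' : R) : 0 < K -> 0 <= z -> z <= z' -> z' <= 1 ->
  0 <= (sinh K)^-1 / K * sinh (K * z) * sinh (K * (1 - z')) /\
  (sinh K)^-1 / K * sinh (K * z) * sinh (K * (1 - z')) <=
    expR (- (K * (z' - z))) / (2 * K).
Proof.
move=> K0 z0 zz z1.
have S0 : 0 < sinh K by apply: sinh_gt0.
have sx0 : 0 <= sinh (K * z) by apply: sinh_ge0; nra.
have sy0 : 0 <= sinh (K * (1 - z')) by apply: sinh_ge0; nra.
have Si : 0 <= (sinh K)^-1 by rewrite invr_ge0 ltW.
have Ki : 0 <= K^-1 by rewrite invr_ge0 ltW.
split; first by do 3 apply: mulr_ge0 => //.
have h := @sinh_key (K * z) (K * (1 - z')) (K * (z' - z)).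
rewrite (_ : K * z + K * (1 - z') + K * (z' - z) = K) in h; last by ring.
have E0 := expR_gt0 (K * (z' - z)).
rewrite expRN.
set E := expR (K * (z' - z)) in h E0 *.
set sx := sinh (K * z) in h sx0 *.
set sy := sinh (K * (1 - z')) in h sy0 *.
set S := sinh K in h S0 *.
have -> : S^-1 / K * sx * sy = (2 * sx * sy * E) * (S^-1 * K^-1 * E^-1 / 2).
  by field; rewrite ?gt_eqF.
have -> : E^-1 / (2 * K) = S * (S^-1 * K^-1 * E^-1 / 2).
  by field; rewrite ?gt_eqF.
apply: ler_wpM2r.
  have Ei : 0 <= E^-1 by rewrite invr_ge0 ltW.
  by apply: mulr_ge0; [apply: mulr_ge0; [apply: mulr_ge0|]|].
apply: h; nra.
Qed.


Lemma knorm_gt0 (k : R * R) : k != (0, 0) -> 0 < knorm k.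
Proof.
case: k => a b; rewrite xpair_eqE negb_and /knorm /= => h.
rewrite sqrtr_gt0.
have a2 := sqr_ge0 a; have b2 := sqr_ge0 b.
case/orP: h; rewrite neq_lt => /orP[]h; nra.
Qed.

Lemma Gk_bound (k : R * R) (z z' : R) : k != (0, 0) ->
  0 <= z -> z <= 1 -> 0 <= z' -> z' <= 1 ->
  0 <= Gk k z z' /\
  Gk k z z' <= expR (- (knorm k * `|z - z'|)) / (2 * knorm k).
Proof.
move=> hk z0 z1 z'0 z'1; have K0 := knorm_gt0 _ hk.
rewrite /Gk (negbTE hk) /=.
case: ifP => zz.
  rewrite distrC ger0_norm ?subr_ge0 //.
  exact: Gcore.
have zz' : z' <= z by rewrite leNgt; apply/negP => /ltW; rewrite zz.
rewrite ger0_norm ?subr_ge0 //.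
exact: Gcore.
Qed.

Lemma G0_bound (z z' : R) :
  0 <= z -> z <= 1 -> 0 <= z' -> z' <= 1 ->
  0 <= Gk (0, 0) z z' /\ Gk (0, 0) z z' <= Num.min z (1 - z).
Proof.
move=> z0 z1 z'0 z'1.
rewrite /Gk eqxx /=.
case: ifP => zz; rewrite le_min.
  split; first nra.
  apply/andP; split; nra.
have zz' : z' <= z by rewrite leNgt; apply/negP => /ltW; rewrite zz.
split; first nra.
apply/andP; split; nra.
Qed.


Lemma pow2_le_expR n : 2 ^+ n <= expR n%:R :> R.
Proof.
elim: n => [|n IH]; first by rewrite expr0 expR0.
rewrite exprS -[n.+1]addn1 natrD expRD mulrC.
have e1 : 2 <= expR 1 :> R by have := expR_ge1Dx (1 : R); rewrite (_ : 1 + 1 = 2 :> R).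
apply: ler_pM => //; exact: exprn_ge0.
Qed.

Definition Hmaj (K : R) (N : nat) (x y : R) : R :=
  \sum_(n < N) (2^-1) ^+ n * (\1_(ball x (n.+1%:R / K)) y : R).

Lemma Hmaj_ge0 K N x y : 0 <= Hmaj K N x y.
Proof.
apply: sumr_ge0 => n _; apply: mulr_ge0; first exact: exprn_ge0.
by rewrite /indic; case: (_ \in _).
Qed.

Lemma exp_le_Hmaj (K x y : R) : 0 < K -> 0 <= x -> x <= 1 -> 0 <= y -> y <= 1 ->
  expR (- (K * `|x - y|)) <= Hmaj K (Num.truncn K).+1 x y.
Proof.
move=> K0 x0 x1 y0 y1.
set d := `|x - y|.
have d0 : 0 <= d by exact: normr_ge0.
have d1 : d <= 1 by rewrite /d; apply/ler_normlP; split; lra.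
have Kd0 : 0 <= K * d by rewrite mulr_ge0 // ltW.
have n0lt : (Num.truncn (K * d) < (Num.truncn K).+1)%N.
  rewrite ltnS Num.Theory.truncn_le_nat (le_lt_trans _ (Num.Theory.truncnS_gt K))//.
  by rewrite ler_piMr // ltW.
pose i0 : 'I_(Num.truncn K).+1 := Ordinal n0lt.
rewrite /Hmaj (bigD1 i0) //=.
have rest : 0 <= \sum_(i < (Num.truncn K).+1 | i != i0) (2^-1) ^+ i * (\1_(ball x (i.+1%:R / K)) y : R).
  apply: sumr_ge0 => n _; apply: mulr_ge0; first exact: exprn_ge0.
  by rewrite /indic; case: (_ \in _).
have inb : (\1_(ball x ((Num.truncn (K * d)).+1%:R / K)) y : R) = 1.
  rewrite /indic mem_set //.
  rewrite -ball_normE /ball_ /= -/d ltr_pdivlMr // mulrC.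
  exact: Num.Theory.truncnS_gt.
rewrite inb mulr1.
rewrite -[expR _]addr0; apply: lerD => //.
have n0le : (Num.truncn (K * d))%:R <= K * d by rewrite Num.Theory.truncn_le.
apply: (le_trans (y := expR (- (Num.truncn (K * d))%:R))).
  by rewrite ler_expR lerN2.
rewrite expRN exprVn lef_pV2 ?posrE ?expR_gt0 ?exprn_gt0 //.
exact: pow2_le_expR.
Qed.

Lemma sum_n_half N : \sum_(n < N) (n.+1%:R) * (2^-1) ^+ n <= 4 :> R.
Proof.
suff -> : \sum_(n < N) (n.+1%:R) * (2^-1) ^+ n = 4 - 2 * (N.+2)%:R * (2^-1) ^+ N :> R.
  rewrite lerBlDr lerDl; apply: mulr_ge0; last exact: exprn_ge0.
  by apply: mulr_ge0.
elim: N => [|N IH]; first by rewrite big_ord0 expr0 mulr1; ring.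
rewrite big_ord_recr /= IH exprS.
by rewrite !mulrS; field.
Qed.

End pointwise.
Section fub.
Context {R : realType}.
Local Notation mu := (@lebesgue_measure R).

Lemma fubini_bound (A : set (measurableTypeR R)) (f : measurableTypeR R * measurableTypeR R -> R)
   (B : measurableTypeR R -> R) :
  measurable A ->
  measurable_fun setT f -> (forall p, 0 <= f p) -> measurable_fun setT B ->
  (forall x, A x -> (\int[mu]_(y in A) (f (x, y))%:E <= (B x)%:E)%E) ->
  (\int[(mu \x mu)%E]_(p in A `*` A) (f p)%:E <= \int[mu]_(x in A) (B x)%:E)%E.
Proof.
move=> mA mf f0 mB hB.
rewrite integral_mkcond [X in (_ <= X)%E]integral_mkcond.
pose g : measurableTypeR R * measurableTypeR R -> \bar R := (fun p => (f p)%:E) \_ (A `*` A).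
change ((fun p => (f p)%:E) \_ (A `*` A)) with g.
have mAA : measurable (A `*` A) by exact: measurableX.
have mg : measurable_fun setT g.
  have h1 : measurable_fun setT (fun p => (f p)%:E) by exact/measurable_EFinP.
  have h2 : measurable_fun (A `*` A) (fun p => (f p)%:E).
    exact: measurable_funS h1.
  exact: (measurable_restrictT _ mAA).1 h2.
have g0 : forall p, (0 <= g p)%E.
  by move=> p; rewrite /g patchE; case: ifP => // _; rewrite lee_fin.
rewrite (fubini_tonelli1 _ mg g0).
apply: ge0_le_integral => //.
- by move=> x _; apply: integral_ge0 => y _; exact: g0.
- exact: measurable_fun_fubini_tonelli_F _ mg g0.
- have h1 : measurable_fun setT (fun x => (B x)%:E) by exact/measurable_EFinP.
  have h2 : measurable_fun A (fun x => (B x)%:E).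
    exact: measurable_funS h1.
  exact: (measurable_restrictT _ mA).1 h2.
move=> x _; rewrite /fubini_F patchE.
case: ifPn => xA.
  have -> : (fun y => g (x, y)) = (fun y => (f (x, y))%:E) \_ A.
    apply/funext => y; rewrite /g !patchE in_setX /= xA /=; done.
  rewrite -integral_mkcond; apply: hB.
  by rewrite inE in xA.
rewrite integral0_eq //.
by move=> y _; rewrite /g patchE in_setX /= (negbTE xA).
Qed.

End fub.
Section meas.
Context {R : realType}.
Local Notation T := (measurableTypeR R).

Lemma measurable_sinh : measurable_fun [set: T] (@sinh R).
Proof.
rewrite /sinh.
apply: (measurable_funM (f := fun x : T => expR x - expR (- x)) (g := cst 2^-1)); last exact: measurable_cst.
apply: measurable_funB; first exact: measurable_expR.
apply: (measurableT_comp (f := expR)); first exact: measurable_expR.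
exact: measurable_funN.
Qed.

Lemma measurable_Gk (k : R * R) :
  measurable_fun [set: T * T] (fun p : T * T => `|Gk k p.1 p.2|).
Proof.
suff H : measurable_fun [set: T * T] (fun p : T * T => Gk k p.1 p.2).
  exact: (measurableT_comp (@normr_measurable _ setT) H).
rewrite /Gk; case: (k == (0, 0)).
  apply: measurable_fun_ifT.
  - exact: (measurable_fun_ler measurable_fst measurable_snd).
  - apply: measurable_funM; first exact: measurable_fst.
    by apply: measurable_funB => //; exact: measurable_snd.
  - apply: measurable_funM; first exact: measurable_snd.
    by apply: measurable_funB => //; exact: measurable_fst.
set K := knorm k.
apply: measurable_fun_ifT.
- exact: (measurable_fun_ler measurable_fst measurable_snd).
- apply: measurable_funM; first apply: measurable_funM => //.
  + apply: (measurableT_comp (f := sinh)); first exact: measurable_sinh.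
    by apply: measurable_funM => //; exact: measurable_fst.
  + apply: (measurableT_comp (f := sinh)); first exact: measurable_sinh.
    apply: measurable_funM => //.
    by apply: measurable_funB => //; exact: measurable_snd.
- apply: measurable_funM; first apply: measurable_funM => //.
  + apply: (measurableT_comp (f := sinh)); first exact: measurable_sinh.
    by apply: measurable_funM => //; exact: measurable_snd.
  + apply: (measurableT_comp (f := sinh)); first exact: measurable_sinh.
    apply: measurable_funM => //.
    by apply: measurable_funB => //; exact: measurable_fst.
Qed.

End meas.
Section inner.
Context {R : realType}.
Local Notation T := (measurableTypeR R).
Local Notation mu := (@lebesgue_measure R).

Lemma int_Hmaj (A : set T) (K : R) (N : nat) (x : R) : measurable A -> 0 < K ->
  (\int[mu]_(y in A) (Hmaj K N x y)%:E <= (8 / K)%:E)%E.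
Proof.
move=> mA K0.
rewrite /Hmaj.
under eq_integral do rewrite -sumEFin.
have mf : forall n : 'I_N, measurable_fun A
    (fun y : T => ((2^-1) ^+ n * (\1_(ball x (n.+1%:R / K)) y : R))%:E).
  move=> n; apply/measurable_EFinP.
  apply: measurable_funM => //.
  apply: measurable_indic; exact: measurable_ball.
have f0 : forall (n : 'I_N) (y : T), A y ->
    (0 <= ((2^-1) ^+ n * (\1_(ball x (n.+1%:R / K)) y : R))%:E)%E.
  move=> n y _; rewrite lee_fin; apply: mulr_ge0; first exact: exprn_ge0.
  by rewrite indicE ler0n.
rewrite (ge0_integral_sum _ mA mf f0).
apply: (le_trans (y := (\sum_(n < N) ((2^-1) ^+ n * (n.+1%:R / K *+ 2))%:E)%E)).
  apply: lee_sum => n _.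
  have kn0 : 0 <= (2^-1 : R) ^+ n by exact: exprn_ge0.
  rewrite (integralZl_indic mA (fun _ => ball x (n.+1%:R / K))); first last.
  - exact: measurable_ball.
  - by rewrite ltNge kn0.
  rewrite integral_indic //; last exact: measurable_ball.
  rewrite EFinM; apply: lee_wpmul2l; first by rewrite lee_fin.
  rewrite -(@lebesgue_measure_ball R x); last by rewrite divr_ge0 // ltW.
  apply: le_measure.
  - by apply/mem_set; apply: measurableI => //; exact: measurable_ball.
  - by apply/mem_set; exact: measurable_ball.
  - exact: subIsetl.
rewrite sumEFin lee_fin.
have -> : \sum_(n < N) (2^-1) ^+ n * (n.+1%:R / K *+ 2) =
  2 / K * \sum_(n < N) (n.+1%:R * (2^-1) ^+ n) :> R.
  rewrite mulr_sumr; apply: eq_bigr => n _.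
  by rewrite -mulr_natr; field; rewrite gt_eqF.
have h := @sum_n_half R N.
have -> : 8 / K = 2 / K * 4 :> R by field; rewrite gt_eqF.
apply: ler_wpM2l => //.
by rewrite divr_ge0 // ltW.
Qed.

End inner.
Section main.
Context {R : realType}.
Local Notation T := (measurableTypeR R).
Local Notation mu := (@lebesgue_measure R).

Lemma measurable_Gk_y (k : R * R) (x : T) (A : set T) : measurable A ->
  measurable_fun A (fun y : T => (`|Gk k x y|)%:E).
Proof.
move=> mA.
have h := measurable_fun_pair2 x (measurable_Gk k).
have h2 : measurable_fun setT (fun y : T => (`|Gk k x y|)%:E).
  by apply/measurable_EFinP.
exact: measurable_funS h2.
Qed.

Lemma int_cstE (A : set T) (r : R) : measurable A ->
  (\int[mu]_(y in A) r%:E = r%:E * mu A)%E.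
Proof.
move=> mA; exact: (integral_cst mu mA r%:E).
Qed.

End main.

Theorem lemma3p3 (R : realType) :
  exists C : R,
  forall A : set (measurableTypeR R),
    measurable A -> A `<=` `[0%R, 1%R] ->
    let mu := (@lebesgue_measure R) in
    let a := fine (mu A) in
    (forall k : R * R, k != (0, 0) ->
       (\int[(mu \x mu)%E]_(p in A `*` A) (`|Gk k p.1 p.2|)%:E <=
        (C * a / knorm k * Num.min a (knorm k)^-1)%:E)%E) /\
    (\int[(mu \x mu)%E]_(p in A `*` A) (`|Gk (0, 0) p.1 p.2|)%:E <=
       (C * a ^+ 2 * a^-1)%:E * \int[mu]_(z in A) (Num.min z (1 - z))%:E)%E.
Proof.
exists 4 => A mA A01 mu a.
have A01' : forall x, A x -> 0 <= x /\ x <= 1.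
  move=> x Ax; have := A01 _ Ax; rewrite /= in_itv /= => /andP[]; done.
have muA : mu A = a%:E.
  have h1 : (mu A <= 1%:E)%E.
    apply: (le_trans (y := mu `[0%R, 1%R]%classic)).
      apply: le_measure => //; rewrite ?inE //.
    by rewrite /mu lebesgue_measure_itv /= lte_fin ltr01 -EFinB subr0.
  rewrite /a fineK // ge0_fin_numE //; exact: (le_lt_trans h1 (ltry _)).
have a0 : 0 <= a by rewrite /a fine_ge0.
have muA' : (@lebesgue_measure R) A = a%:E := muA.
split.
- move=> k hk.
  set K := knorm k.
  have K0 : 0 < K := knorm_gt0 _ hk.
  set M := Num.min (a / (2 * K)) (4 / K ^+ 2).
  have hB : forall x, A x ->
      (\int[mu]_(y in A) (`|Gk k x y|)%:E <= ((fun _ => M) x)%:E)%E.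
    move=> x Ax; rewrite /M EFin_min le_min; apply/andP; split.
      apply: (le_trans (y := (\int[mu]_(y in A) ((2 * K)^-1)%:E)%E)).
        apply: (ge0_le_integral mu mA).
        - by move=> y _; rewrite lee_fin.
        - exact: measurable_Gk_y.
        - exact: measurable_cst.
        move=> y Ay; rewrite lee_fin.
        have [x0 x1] := A01' _ Ax; have [y0 y1] := A01' _ Ay.
        have [g0 g1] := Gk_bound _ _ _ hk x0 x1 y0 y1.
        rewrite ger0_norm //; apply: (le_trans g1).
        rewrite -[X in _ <= X]mul1r; apply: ler_wpM2r.
          by rewrite invr_ge0 mulr_ge0 // ltW.
        by rewrite -expR0 ler_expR oppr_le0 mulr_ge0 // ltW.
      by rewrite int_cstE // muA' -EFinM lee_fin mulrC.
    pose N := (Num.truncn K).+1.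
    have mH : measurable_fun A (fun y : measurableTypeR R => (Hmaj K N x y)%:E).
      apply/measurable_EFinP; rewrite /Hmaj; apply: measurable_sum => n.
      apply: measurable_funM => //; apply: measurable_indic; exact: measurable_ball.
    have H0 : forall y, A y -> (0 <= (Hmaj K N x y)%:E)%E.
      by move=> y _; rewrite lee_fin; exact: Hmaj_ge0.
    have K2 : 0 <= (2 * K)^-1 by rewrite invr_ge0 mulr_ge0 // ltW.
    apply: (le_trans (y := (\int[mu]_(y in A) ((2 * K)^-1%:E * (Hmaj K N x y)%:E))%E)).
      apply: (ge0_le_integral mu mA).
      - by move=> y _; rewrite lee_fin.
      - exact: measurable_Gk_y.
      - under eq_fun do rewrite -EFinM.
        apply/measurable_EFinP; apply: measurable_funM => //.
        exact/measurable_EFinP.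
      move=> y Ay; rewrite -EFinM lee_fin.
      have [x0 x1] := A01' _ Ax; have [y0 y1] := A01' _ Ay.
      have [g0 g1] := Gk_bound _ _ _ hk x0 x1 y0 y1.
      rewrite ger0_norm //; apply: (le_trans g1).
      rewrite [X in X <= _]mulrC; apply: ler_wpM2l => //.
      exact: exp_le_Hmaj.
    rewrite (ge0_integralZl_EFin mu mA H0 mH K2).
    apply: (le_trans (lee_wpmul2l _ (int_Hmaj _ _ N x mA K0))).
      by rewrite lee_fin.
    rewrite -EFinM lee_fin le_eqVlt; apply/orP; left; apply/eqP.
    by field; rewrite gt_eqF.
  apply: (le_trans (fubini_bound A (fun p => `|Gk k p.1 p.2|) (fun _ => M)
    mA (measurable_Gk k) (fun p => normr_ge0 _) (measurable_cst _) hB)).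
  rewrite int_cstE // muA' -EFinM lee_fin.
  have hM : M <= 4 / K * Num.min a K^-1.
    have [h|h] := leP a K^-1.
      rewrite /M ge_min; apply/orP; left.
      have i0 : 0 < K^-1 by rewrite invr_gt0.
      rewrite invfM; move: i0; set i := K^-1 => i0.
      nra.
    rewrite /M ge_min; apply/orP; right.
    by rewrite le_eqVlt; apply/orP; left; apply/eqP; field; rewrite gt_eqF.
  have -> : 4 * a / K * Num.min a K^-1 = (4 / K * Num.min a K^-1) * a.
    by ring.
  by apply: ler_wpM2r.
have hB : forall x, A x -> (\int[mu]_(y in A) (`|Gk (0, 0) x y|)%:E <=
    ((fun x => a * Num.min x (1 - x)) x)%:E)%E.
  move=> x Ax.
  apply: (le_trans (y := (\int[mu]_(y in A) (Num.min x (1 - x))%:E)%E)).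
    apply: (ge0_le_integral mu mA).
    - by move=> y _; rewrite lee_fin.
    - exact: measurable_Gk_y.
    - exact: measurable_cst.
    move=> y Ay; rewrite lee_fin.
    have [x0 x1] := A01' _ Ax; have [y0 y1] := A01' _ Ay.
    have [g0 g1] := G0_bound _ _ x0 x1 y0 y1.
    by rewrite ger0_norm.
  by rewrite int_cstE // muA' -EFinM lee_fin mulrC.
have mmin : measurable_fun setT (fun x : measurableTypeR R => Num.min x (1 - x)).
  apply: (measurable_minr (f := fun x => x) (g := fun x => 1 - x)).
    exact: measurable_id.
  by apply: measurable_funB => //; exact: measurable_id.
have mB : measurable_fun setT (fun x : measurableTypeR R => a * Num.min x (1 - x)).
  by apply: measurable_funM => //.
apply: (le_trans (fubini_bound A (fun p => `|Gk (0, 0) p.1 p.2|)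
  (fun x => a * Num.min x (1 - x)) mA (measurable_Gk _) (fun p => normr_ge0 _) mB hB)).
under eq_integral do rewrite EFinM.
have m0 : forall x, A x -> (0 <= (Num.min x (1 - x))%:E)%E.
  move=> x Ax; have [x0 x1] := A01' _ Ax.
  by rewrite lee_fin le_min; apply/andP; split; lra.
have mm : measurable_fun A (fun x : measurableTypeR R => (Num.min x (1 - x))%:E).
  apply/measurable_EFinP; exact: measurable_funS mmin.
rewrite (ge0_integralZl_EFin mu mA m0 mm a0).
apply: lee_wpmul2r; first exact: integral_ge0.
rewrite lee_fin.
have [->|an0] := eqVneq a 0; first by rewrite expr0n /= mulr0 mul0r.
have -> : 4 * a ^+ 2 / a = 4 * a by field.
lra.
Qed.
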